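(* Fix an alphabet $\Sigma=\{a_1,\dots,a_\sigma\}$ with $\sigma\ge 1$. Then: (i) every word of length $n$ over $\Sigma$ has at most $n^2$ distinct Abelian periods; (ii) for every $n\ge 1$ divisible by $\sigma$, the word $w=(a_1a_2\cdots a_\sigma)^{n/\sigma}$ has Abelian period $(h,p)$ for every integer $p$ with $1\le p\le n$ and $p\equiv 0 \pmod{\sigma}$ and every integer $h$ with $0\le h\le \min(p-1,\,n-p)$. Consequently there is a constant $c>0$ depending only on $\sigma$ such that, for every $n$ divisible by $\sigma$, this word has at least $c\,n^2$ distinct Abelian periods. Hence the maximum number of Abelian periods of a word of length $n$ over $\Sigma$ is $\Theta(n^2)$.
   Context: Words are finite sequences over a finite alphabet $\Sigma=\{a_1,\dots,a_\sigma\}$; positions are numbered from $1$, $w[i]$ is the $i$-th letter and $|w|$ the length. For a word $u$, its Parikh vector is $\mathcal{P}_u=(|u|_{a_1},\dots,|u|_{a_\sigma})$, where $|u|_a$ is the number of occurrences of the letter $a$ in $u$; its norm is $|\mathcal{P}_u|=\sum_i \mathcal{P}_u[i]=|u|$. For Parikh vectors $\mathcal{P},\mathcal{Q}$ write $\mathcal{P}\subset\mathcal{Q}$ if $\mathcal{P}[i]\le\mathcal{Q}[i]$ for all $1\le i\le\sigma$ and $|\mathcal{P}|<|\mathcal{Q}|$ (and $\mathcal{Q}\supset\mathcal{P}$ means the same). A word $w$ has Abelian period $(h,p)$ (integers $h\ge0$, $p\ge1$) if $w=u_0u_1\cdots u_{k-1}u_k$ for some $k\ge 2$ and words $u_0,\dots,u_k$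 (where $u_0$ and $u_k$ may be empty) with $|u_0|=h$, $|u_1|=p$ and $\mathcal{P}_{u_0}\subset\mathcal{P}_{u_1}=\mathcal{P}_{u_2}=\cdots=\mathcal{P}_{u_{k-1}}\supset\mathcal{P}_{u_k}$. Two Abelian periods are distinct if they are distinct pairs $(h,p)$. *)

(* Defs.v *)
From mathcomp Require Import all_boot all_order all_algebra.
Set Implicit Arguments. Unset Strict Implicit. Unset Printing Implicit Defensive.

Definition parikh (T : finType) (u : seq T) : {ffun T -> nat} :=
  [ffun a => count_mem a u].

Definition pnorm (T : finType) (P : {ffun T -> nat}) : nat := \sum_(a : T) P a.

Definition psub (T : finType) (P Q : {ffun T -> nat}) : Prop :=
  (forall a, P a <= Q a) /\ pnorm P < pnorm Q.

(* w has Abelian period (h,p): w = u_0 u_1 ... u_k, k >= 2, |u_0| = h,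
   |u_1| = p, P_{u_0} ⊂ P_{u_1} = ... = P_{u_{k-1}} ⊃ P_{u_k}.
   The list us = [u_0; ...; u_k] has size k+1. *)
Definition abelian_period (T : finType) (w : seq T) (h p : nat) : Prop :=
  1 <= p /\
  exists us : seq (seq T),
    [/\ 3 <= size us /\ flatten us = w,
        size (nth [::] us 0) = h /\ size (nth [::] us 1) = p,
        (forall i, 1 <= i < (size us).-1 ->
            parikh (nth [::] us i) = parikh (nth [::] us 1)),
        psub (parikh (nth [::] us 0)) (parikh (nth [::] us 1))
      & psub (parikh (nth [::] us (size us).-1)) (parikh (nth [::] us 1))].

Definition cyc_word (sigma n : nat) : seq 'I_sigma :=
  flatten (nseq (n %/ sigma) (enum 'I_sigma)).

(* Main.v *)
Require Import Defs.
From mathcomp Require Import all_boot all_order all_algebra.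
From mathcomp Require Import zify.
Import Order.TTheory GRing.Theory Num.Theory.

Lemma pnorm_parikh (T : finType) (u : seq T) : pnorm (parikh u) = size u.
Proof.
rewrite /pnorm /parikh; under eq_bigr => a _ do rewrite ffunE.
elim: u => [|x u IH] /=; first by rewrite big1.
rewrite big_split /= IH (bigD1 x) //= eqxx big1 ?addn0 // => a /negbTE.
by rewrite eq_sym => ->.
Qed.

Lemma size_nth_flatten (T : Type) (ss : seq (seq T)) i :
  size (nth [::] ss i) <= size (flatten ss).
Proof.
elim: ss i => [|s ss IH] [|i] //=; rewrite size_cat ?leq_addr //.
exact: leq_trans (IH i) (leq_addl _ _).
Qed.

Lemma ap_bound (T : finType) (w : seq T) h p :
  abelian_period w h p -> h < p /\ 1 <= p <= size w.
Proof.
case=> p1 [us [[_ Hf] [Hh Hp] _ [_ Hn] _]].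
split; first by move: Hn; rewrite !pnorm_parikh Hh Hp.
by rewrite p1 -Hf -Hp size_nth_flatten.
Qed.

Section Cyc.
Variable sigma : nat.
Hypothesis Hs : 0 < sigma.

Definition f (i : nat) : 'I_sigma := Ordinal (ltn_pmod i Hs).

Lemma enum_f : enum 'I_sigma = map f (iota 0 sigma).
Proof.
rewrite -val_enum_ord -map_comp -[LHS]map_id; apply: eq_map => x /=.
by apply: val_inj; rewrite /= modn_small.
Qed.

Lemma cyc_f n : cyc_word sigma n = map f (iota 0 (n %/ sigma * sigma)).
Proof.
rewrite /cyc_word; elim: (n %/ sigma) => [|k IH] //=.
rewrite IH mulSn iotaD map_cat enum_f; congr (_ ++ _).
rewrite -[in iota sigma _](addn0 sigma) iotaDl -map_comp addn0; apply: eq_map => x /=.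
by apply: val_inj; rewrite /= modnDl.
Qed.

Lemma count_f (a : 'I_sigma) s l :
  count_mem a (map f (iota s l)) = count (fun i => i %% sigma == a) (iota s l).
Proof. by rewrite count_map; apply: eq_count => i /=; rewrite -val_eqE. Qed.

Lemma count_window (a : nat) s : a < sigma ->
  count (fun i => i %% sigma == a) (iota s sigma) = 1.
Proof.
move=> Ha; elim: s => [|s IH].
  rewrite (eq_in_count (a2 := fun i => i == a)).
    by change (count_mem a (iota 0 sigma) = 1); rewrite count_uniq_mem ?iota_uniq // mem_iota Ha.
  by move=> i; rewrite mem_iota /= => Hi; rewrite modn_small.
have E : count (fun i => i %% sigma == a) (iota s sigma.+1) =
  count (fun i => i %% sigma == a) (iota s (sigma + 1)) by rewrite addn1.
move: E; rewrite iotaD count_cat /= -/(iota s.+1 sigma) IH /= modnDr; lia.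
Qed.

Lemma count_mult (a : nat) s k : a < sigma ->
  count (fun i => i %% sigma == a) (iota s (k * sigma)) = k.
Proof.
move=> Ha; elim: k s => [|k IH] s //=.
by rewrite mulSn iotaD count_cat count_window // IH add1n.
Qed.

Lemma count_le (a : nat) s l k : a < sigma -> l <= k * sigma ->
  count (fun i => i %% sigma == a) (iota s l) <= k.
Proof.
move=> Ha Hl; rewrite -(@count_mult a s k Ha) -(subnKC Hl) iotaD count_cat.
exact: leq_addr.
Qed.


Lemma flatten_blocks s p q :
  flatten [seq iota (s + i * p) p | i <- iota 0 q] = iota s (q * p).
Proof.
elim: q => [|q IH] //; rewrite -addn1 iotaD map_cat flatten_cat IH /= cats0.
by rewrite add0n mulnDl mul1n iotaD.
Qed.

Lemma parikh_block s k : parikh (map f (iota s (k * sigma))) = [ffun=> k].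
Proof. by apply/ffunP => a; rewrite !ffunE count_f count_mult. Qed.

Lemma psub_small s s' l k : l < k * sigma ->
  psub (parikh (map f (iota s l))) (parikh (map f (iota s' (k * sigma)))).
Proof.
move=> Hl; split; last by rewrite !pnorm_parikh !size_map !size_iota.
move=> a; rewrite parikh_block !ffunE count_f count_le //; exact: ltnW.
Qed.

Lemma period_cyc n p h : sigma %| n -> 1 <= p <= n -> sigma %| p ->
  h <= minn (p - 1) (n - p) -> abelian_period (cyc_word sigma n) h p.
Proof.
move=> dn /andP [p1 pn] dp; rewrite leq_min => /andP [hp hn].
have hp' : h < p by lia.
set q := (n - h) %/ p; set r := (n - h) %% p.
have q1 : 0 < q by rewrite divn_gt0 //; lia.
have Eq : h + q * p + r = n by rewrite -addnA /q /r -divn_eq; lia.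
set k := p %/ sigma; have Ek : p = k * sigma by rewrite divnK.
split => //.
exists (map (map f) (iota 0 h :: [seq iota (h + i * p) p | i <- iota 0 q] ++
          [:: iota (h + q * p) r])).
have nthB : forall i, i < q -> nth [::] (map (map f)
    (iota 0 h :: [seq iota (h + i * p) p | i <- iota 0 q] ++
     [:: iota (h + q * p) r])) i.+1 = map f (iota (h + i * p) p).
  move=> i iq /=; rewrite (nth_map [::]); last by rewrite size_cat size_map size_iota; lia.
  rewrite nth_cat size_map size_iota iq (nth_map 0) ?size_iota // nth_iota //.
have sz : size (map (map f) (iota 0 h :: [seq iota (h + i * p) p | i <- iota 0 q] ++
          [:: iota (h + q * p) r])) = q.+2.
  by rewrite /= size_map size_cat size_map size_iota addn1.
have nthL : nth [::] (map (map f)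
    (iota 0 h :: [seq iota (h + i * p) p | i <- iota 0 q] ++
     [:: iota (h + q * p) r])) q.+1 = map f (iota (h + q * p) r).
  by rewrite /= map_cat nth_cat !size_map size_iota ltnn subnn.
rewrite sz -[(q.+2).-1]/(q.+1) nthL (nthB 0) // mul0n addn0.
split.
- split; first by [].
  rewrite cyc_f divnK // -map_flatten /= flatten_cat flatten_blocks /=.
  by rewrite cats0 -iotaD -[h in iota h _]add0n -iotaD addnA Eq.
- by rewrite /= !size_map !size_iota.
- move=> i /andP [i1 iq]; case: i i1 iq => [|i] // _ iq.
  by rewrite nthB // Ek !parikh_block.
- rewrite /= Ek; apply: psub_small; rewrite -Ek //.
- rewrite Ek; apply: psub_small; rewrite -Ek /r ltn_pmod //.
Qed.

End Cyc.

Theorem lemma1 (sigma : nat) (Hsigma : 1 <= sigma) :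
  (* (i) at most n^2 distinct Abelian periods *)
  (forall (w : seq 'I_sigma) (s : seq (nat * nat)),
      uniq s -> (forall x, x \in s -> abelian_period w x.1 x.2) ->
      size s <= (size w) ^ 2)
  /\
  (* (ii) the periods of (a_1...a_sigma)^(n/sigma) *)
  (forall n p h, 1 <= n -> sigma %| n ->
      1 <= p <= n -> sigma %| p -> h <= minn (p - 1) (n - p) ->
      abelian_period (cyc_word sigma n) h p)
  /\
  (* consequence: at least c n^2 distinct Abelian periods *)
  (exists c : rat, (0 < c)%R /\
     forall n, sigma %| n ->
       exists s : seq (nat * nat),
         [/\ uniq s,
             (forall x, x \in s -> abelian_period (cyc_word sigma n) x.1 x.2)
           & (c * (n ^ 2)%:R <= (size s)%:R)%R]).
Proof.
have P2 : forall n p h, 1 <= n -> sigma %| n ->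
      1 <= p <= n -> sigma %| p -> h <= minn (p - 1) (n - p) ->
      abelian_period (cyc_word sigma n) h p.
  by move=> n p h _; apply: period_cyc.
split; last split => //.
  move=> w s us Hw.
  apply: (leq_trans (uniq_leq_size (s2 := [seq (x, y) | y <- iota 1 (size w),
      x <- iota 0 (size w)]) us _)).
    move=> [h p] /Hw /ap_bound [hp /andP [p1 pn]].
    apply/allpairsP; exists (p, h); move: hp p1 pn => /= hp p1 pn; rewrite !mem_iota; split => //; lia.
  by rewrite size_allpairs !size_iota; lia.
exists (((9 * sigma ^ 2)%N%:R)^-1)%R; split.
  by rewrite invr_gt0 ltr0n muln_gt0 expn_gt0 Hsigma.
move=> n dn; set m := n %/ sigma; set t := (m + 2) %/ 3.
have En : n = m * sigma by rewrite divnK.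
have t3 : 3 * t <= m + 2 by rewrite mulnC leq_trunc_div.
have t3' : m <= 3 * t.
  have := ltn_pmod (m + 2) (isT : 0 < 3); have := divn_eq (m + 2) 3; rewrite -/t; lia.
exists [seq (h, sigma * j) | h <- iota 0 t, j <- iota t t]; split.
- apply: allpairs_uniq; rewrite ?iota_uniq //.
  move=> [a b] [a' b'] _ _ /= [-> /eqP]; rewrite eqn_mul2l gtn_eqF //=.
  by move/eqP ->.
- move=> x /allpairsP [[h j] [/=]]; rewrite !mem_iota => hh jj -> /=.
  have t1 : 1 <= t by lia.
  have j1 : j <= sigma * j by rewrite leq_pmull.
  have m1 : m - j <= sigma * (m - j) by rewrite leq_pmull.
  have E2 : n - sigma * j = sigma * (m - j) by rewrite En mulnC mulnBr.
  apply: P2 => //; first (rewrite En; nia).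
  + apply/andP; split; first lia.
    by rewrite En mulnC leq_mul2r; apply/orP; right; lia.
  + exact: dvdn_mulr.
  + rewrite leq_min E2; apply/andP; split; lia.
- rewrite size_allpairs !size_iota ler_pdivrMl ?ltr0n ?muln_gt0 ?expn_gt0 ?Hsigma //.
  rewrite -natrM ler_nat En.
  have : m * m <= (3 * t) * (3 * t) by apply: leq_mul.
  nia.
Qed.
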